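(* Let $G=(V,E)$ be a fixed connected simple undirected graph on $N\ge 2$ nodes, and consider the system on $G$ with update rule $x_i(k+1)=\operatorname{sign}[v_i(k)+\xi_i(k)]$ and noise level $\eta>0$. Let $D=\max_{i\in V}|N_i|$ be the maximum number of nodes in one neighborhood. (i) If $\eta\in(1-2/D,\,1]$, then for every initial condition $x(0)$, with probability one the system converges to agreement: the state eventually becomes (and thereafter remains) either the all-$(+1)$ state or the all-$(-1)$ state. (ii) If $\eta>1$, then for every initial condition, $\mathbf{E}\,S(k)\to 0$ as $k\to\infty$.
   Context: System on a graph: nodes $V=\{1,\dots,N\}$, each node $i$ carries a value $x_i(k)\in\{+1,-1\}$ at each time $k=0,1,2,\dots$. The neighborhood $N_i$ of node $i$ is the set consisting of node $i$ itself together with all nodes adjacent to $i$. Set $v_i(k)=\frac{1}{|N_i|}\sum_{j\in N_i}x_j(k)$. The update rule is $x_i(k+1)=\operatorname{sign}[v_i(k)+\xi_i(k)]$, where the noises $\xi_i(k)$ are uniformly distributed on $[-\eta,\eta]$, independent across $i$ and $k$, and independent of the initial state $x(0)$ (which may be arbitrary, possibly random). The state is $x(k)=(x_1(k),\dots,x_N(k))$ and the state sum is $S(k)=\sum_{i=1}^N x_i(k)$; the all-$(+1)$ and all-$(-1)$ states are denoted $+N$ and $-N$. The state process is a Markov chain on $\{\pm1\}^N$. *)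

(* Defs.v *)
From Stdlib Require Import Reals.
From mathcomp Require Import all_boot.

Set Implicit Arguments.
Unset Strict Implicit.
Unset Printing Implicit Defensive.
Local Open Scope R_scope.

Definition simple_graph (N : nat) (adj : rel 'I_N) : Prop :=
  (forall i j, adj i j = adj j i) /\ (forall i, adj i i = false).

Definition connected_graph (N : nat) (adj : rel 'I_N) : Prop :=
  forall i j, connect adj i j.

Definition nbhd (N : nat) (adj : rel 'I_N) (i : 'I_N) : {set 'I_N} :=
  [set j | (j == i) || adj i j].

Definition maxdeg (N : nat) (adj : rel 'I_N) : nat :=
  \max_(i : 'I_N) #|nbhd adj i|.

(* States: x : {ffun 'I_N -> bool}, true encodes +1 and false encodes -1. *)
Definition state (N : nat) := {ffun 'I_N -> bool}.

Definition spin (b : bool) : R := if b then 1 else (-1).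

Definition Rsum (T : finType) (f : T -> R) : R := \big[Rplus/0]_(t : T) f t.
Definition Rprod (T : finType) (f : T -> R) : R := \big[Rmult/1]_(t : T) f t.

Definition vavg (N : nat) (adj : rel 'I_N) (x : state N) (i : 'I_N) : R :=
  Rdiv (\big[Rplus/0]_(j in nbhd adj i) spin (x j)) (INR #|nbhd adj i|).

(* CDF of the uniform distribution on [-eta, eta]. *)
Definition unif_cdf (eta t : R) : R :=
  Rmin 1 (Rmax 0 ((t + eta) / (2 * eta))).

(* P(sign(v + xi) = +1) = P(xi > -v) for xi ~ U[-eta,eta]
   (the event v + xi = 0 has probability zero). *)
Definition p_plus (eta v : R) : R := 1 - unif_cdf eta (- v).

(* One-step transition probability of the Markov chain:
   the nodes update independently. *)
Definition trans (N : nat) (adj : rel 'I_N) (eta : R) (x y : state N) : R :=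
  Rprod (fun i : 'I_N =>
    if y i then p_plus eta (vavg adj x i) else 1 - p_plus eta (vavg adj x i)).

Fixpoint dist (N : nat) (adj : rel 'I_N) (eta : R) (mu0 : state N -> R)
  (k : nat) : state N -> R :=
  match k with
  | O => mu0
  | S k' => fun y => Rsum (fun x : state N => dist adj eta mu0 k' x * trans adj eta x y)
  end.

Definition is_distribution (N : nat) (mu : state N -> R) : Prop :=
  (forall x, 0 <= mu x) /\ Rsum mu = 1.

Definition agreement (N : nat) (x : state N) : bool :=
  [forall i, x i] || [forall i, ~~ x i].

(* Probability, starting from state s at time 0, that x(0), ..., x(M)
   all lie in the agreement set. *)
Fixpoint stay_prob (N : nat) (adj : rel 'I_N) (eta : R) (M : nat) (s : state N) : R :=
  match M with
  | O => if agreement s then 1 else 0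
  | S M' => if agreement s then
              Rsum (fun y : state N => trans adj eta s y * stay_prob adj eta M' y)
            else 0
  end.

(* P( x(K), x(K+1), ..., x(K+M) all in {+N, -N} ). *)
Definition agree_window_prob (N : nat) (adj : rel 'I_N) (eta : R)
  (mu0 : state N -> R) (K M : nat) : R :=
  Rsum (fun s : state N => dist adj eta mu0 K s * stay_prob adj eta M s).

Definition state_sum (N : nat) (x : state N) : R := Rsum (fun i : 'I_N => spin (x i)).

Definition expected_sum (N : nat) (adj : rel 'I_N) (eta : R)
  (mu0 : state N -> R) (k : nat) : R :=
  Rsum (fun x : state N => dist adj eta mu0 k x * state_sum x).

(* Main.v *)
From HB Require Import structures.
From Stdlib Require Import Reals Lra Lia.
From mathcomp Require Import all_boot.
From mathcomp Require Import zify.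
Require Import Defs.
Local Open Scope R_scope.

HB.instance Definition _ := Monoid.isComLaw.Build R 0 Rplus (fun a b c => esym (Rplus_assoc a b c)) Rplus_comm Rplus_0_l.
HB.instance Definition _ := Monoid.isComLaw.Build R 1 Rmult (fun a b c => esym (Rmult_assoc a b c)) Rmult_comm Rmult_1_l.
HB.instance Definition _ := Monoid.isMulLaw.Build R 0 Rmult Rmult_0_l Rmult_0_r.
HB.instance Definition _ := Monoid.isAddLaw.Build R Rmult Rplus Rmult_plus_distr_r Rmult_plus_distr_l.

Lemma sum_ge0 (T : finType) (P : pred T) (f : T -> R) :
  (forall t, P t -> 0 <= f t) -> 0 <= \big[Rplus/0]_(t | P t) f t.
Proof. move=> H; apply: big_ind => //; [lra| move=> *; lra]. Qed.

Lemma sum_le (T : finType) (P : pred T) (f g : T -> R) :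
  (forall t, P t -> f t <= g t) -> \big[Rplus/0]_(t | P t) f t <= \big[Rplus/0]_(t | P t) g t.
Proof. move=> H; apply: (big_ind2 (fun a b => a <= b)) => //; [lra| move=> *; lra]. Qed.

Lemma sum_ge_term (T : finType) (f : T -> R) (t0 : T) :
  (forall t, 0 <= f t) -> f t0 <= \big[Rplus/0]_t f t.
Proof. move=> H; rewrite (bigD1 t0) //=. have := @sum_ge0 T (fun t => t != t0) f (fun t _ => H t). lra. Qed.

Lemma prod_gt0 (T : finType) (f : T -> R) :
  (forall t, 0 < f t) -> 0 < \big[Rmult/1]_t f t.
Proof. move=> H; apply: big_ind => //; [lra| move=> *; nra]. Qed.

Lemma prod_ge0 (T : finType) (f : T -> R) :
  (forall t, 0 <= f t) -> 0 <= \big[Rmult/1]_t f t.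
Proof. move=> H; apply: big_ind => //; [lra| move=> *; nra]. Qed.

Lemma sum_abs (T : finType) (P : pred T) (f : T -> R) :
  Rabs (\big[Rplus/0]_(t | P t) f t) <= \big[Rplus/0]_(t | P t) Rabs (f t).
Proof.
apply: (big_ind2 (fun a b => Rabs a <= b)).
- rewrite Rabs_R0; lra.
- move=> a b c d H1 H2; have := Rabs_triang a c; lra.
- move=> *; lra.
Qed.

Lemma sum_prod (N : nat) (g : 'I_N -> bool -> R) :
  \big[Rplus/0]_(y : {ffun 'I_N -> bool}) \big[Rmult/1]_(i : 'I_N) g i (y i)
  = \big[Rmult/1]_(i : 'I_N) (g i true + g i false).
Proof.
rewrite -bigA_distr_bigA; apply: eq_bigr => i _.
by rewrite big_bool /= Rplus_comm.
Qed.

Set Implicit Arguments.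
Unset Strict Implicit.

Lemma sum_const (T : finType) (A : {pred T}) (c : R) :
  \big[Rplus/0]_(t in A) c = INR #|A| * c.
Proof.
rewrite big_const; elim: #|A| => [|n IH]; first (simpl; lra).
rewrite iterS IH S_INR; lra.
Qed.

Lemma sum_ge_term_P (T : finType) (P : pred T) (f : T -> R) (t0 : T) :
  P t0 -> (forall t, P t -> 0 <= f t) -> f t0 <= \big[Rplus/0]_(t | P t) f t.
Proof.
move=> Ht0 H; rewrite (bigD1 t0) //=.
have := @sum_ge0 T (fun t => P t && (t != t0)) f (fun t Ht => H t (proj1 (andP Ht))). lra.
Qed.

Lemma unif_cdf_01 e t : 0 <= unif_cdf e t <= 1.
Proof.
rewrite /unif_cdf; split.
- apply: Rmin_glb; [lra| apply: Rmax_l].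
- apply: Rmin_l.
Qed.

Lemma p_plus_01 e v : 0 <= p_plus e v <= 1.
Proof. rewrite /p_plus; have := unif_cdf_01 e (-v); lra. Qed.

Section Model.
Variables (N : nat) (adj : rel 'I_N) (eta : R).

Definition fac (x : state N) (i : 'I_N) (b : bool) : R :=
  if b then p_plus eta (vavg adj x i) else 1 - p_plus eta (vavg adj x i).

Lemma transE x y : trans adj eta x y = \big[Rmult/1]_(i : 'I_N) fac x i (y i).
Proof. by []. Qed.

Lemma fac_ge0 x i b : 0 <= fac x i b.
Proof. rewrite /fac; have := p_plus_01 eta (vavg adj x i); case: b; lra. Qed.

Lemma trans_ge0 x y : 0 <= trans adj eta x y.
Proof. rewrite transE; apply: prod_ge0 => i; apply: fac_ge0. Qed.

Lemma trans_sum1 x : \big[Rplus/0]_(y : state N) trans adj eta x y = 1.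
Proof.
rewrite (eq_bigr (fun y : {ffun 'I_N -> bool} => \big[Rmult/1]_(i : 'I_N) fac x i (y i))) //.
rewrite sum_prod big1 // => i _; rewrite /fac; lra.
Qed.

Lemma trans_spin x i :
  \big[Rplus/0]_(y : state N) (trans adj eta x y * spin (y i))
  = 2 * p_plus eta (vavg adj x i) - 1.
Proof.
pose g j b := fac x j b * (if j == i then spin b else 1).
have E : forall y : state N, trans adj eta x y * spin (y i) = \big[Rmult/1]_(j : 'I_N) g j (y j).
  move=> y; rewrite /g big_split /= -transE; congr (_ * _).
  rewrite (bigD1 i) //= eqxx big1 ?Rmult_1_r // => j /negbTE ->; done.
rewrite (eq_bigr _ (fun y _ => E y)) sum_prod (bigD1 i) //= big1.
  rewrite /g eqxx /fac /=; lra.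
move=> j /negbTE; rewrite /g => ->; rewrite /fac; lra.
Qed.

Definition Pop (f : state N -> R) (x : state N) : R :=
  \big[Rplus/0]_(y : state N) (trans adj eta x y * f y).

Definition Ex (mu0 : state N -> R) k (f : state N -> R) : R :=
  \big[Rplus/0]_(x : state N) (dist adj eta mu0 k x * f x).

Lemma Ex_step mu0 k f : Ex mu0 k.+1 f = Ex mu0 k (Pop f).
Proof.
rewrite /Ex /Pop /=.
rewrite (eq_bigr (fun y => \big[Rplus/0]_(x : state N) (dist adj eta mu0 k x * trans adj eta x y * f y))); last first.
  by move=> y _; rewrite /Rsum big_distrl.
rewrite exchange_big /=; apply: eq_bigr => x _; rewrite big_distrr /=.
by apply: eq_bigr => y _; rewrite Rmult_assoc.
Qed.

Lemma Pop_const c x : Pop (fun _ => c) x = c.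
Proof. by rewrite /Pop -big_distrl /= trans_sum1 Rmult_1_l. Qed.

Lemma dist_ge0 mu0 k : (forall x, 0 <= mu0 x) -> forall x, 0 <= dist adj eta mu0 k x.
Proof.
move=> H; elim: k => [|k IH] x //=; rewrite /Rsum; apply: sum_ge0 => y _.
apply: Rmult_le_pos => //; apply: trans_ge0.
Qed.

Lemma Ex_one mu0 k : is_distribution mu0 -> Ex mu0 k (fun _ => 1) = 1.
Proof.
case=> _ H1; elim: k => [|k IH].
  transitivity (Rsum mu0); last exact H1; rewrite /Ex /Rsum /=; apply: eq_bigr => x _; lra.
rewrite Ex_step -[X in _ = X]IH /Ex; apply: eq_bigr => x _; by rewrite Pop_const.
Qed.

End Model.


Section V.
Variables (N : nat) (adj : rel 'I_N).

Lemma nbhd_self i : i \in nbhd adj i.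
Proof. by rewrite inE eqxx. Qed.

Lemma nbhd_pos i : 0 < INR #|nbhd adj i|.
Proof. apply: lt_0_INR; apply/ltP; apply/card_gt0P; exists i; exact: nbhd_self. Qed.

Definition ssum (x : state N) i := \big[Rplus/0]_(j in nbhd adj i) spin (x j).

Lemma vavgE x i : vavg adj x i = ssum x i / INR #|nbhd adj i|.
Proof. by []. Qed.

Lemma ssum_abs x i : Rabs (ssum x i) <= INR #|nbhd adj i|.
Proof.
apply: Rle_trans (sum_abs _ _ _) _.
rewrite (eq_bigr (fun _ => 1)) ?sum_const; first lra.
move=> j _; rewrite /spin; case: (x j); [rewrite Rabs_right; lra | rewrite Rabs_left; lra].
Qed.

Lemma vavg_abs x i : Rabs (vavg adj x i) <= 1.
Proof.
rewrite vavgE /Rdiv Rabs_mult Rabs_inv.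
rewrite (Rabs_right (INR _)); last by have := nbhd_pos i; lra.
have := nbhd_pos i; have := ssum_abs x i => H1 H2.
have H3 : 0 <= / INR #|nbhd adj i| by apply: Rlt_le; apply: Rinv_0_lt_compat.
apply: Rle_trans (Rmult_le_compat_r _ _ _ H3 H1) _.
rewrite Rinv_r; lra.
Qed.
End V.

Lemma p_plus_lin eta v : 1 < eta -> Rabs v <= 1 -> 2 * p_plus eta v - 1 = v / eta.
Proof.
move=> He Hv; have [Hv1 Hv2] : -1 <= v <= 1 by split; [have := Rabs_Ropp v; have := RRle_abs (- v) | have := RRle_abs v]; lra.
rewrite /p_plus /unif_cdf.
have H0 : 0 <= (- v + eta) / (2 * eta).
  apply: Rmult_le_pos; [lra| apply: Rlt_le; apply: Rinv_0_lt_compat; lra].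
have H1 : (- v + eta) / (2 * eta) <= 1.
  rewrite /Rdiv; apply: (Rmult_le_reg_r (2*eta)); first lra.
  rewrite Rmult_assoc Rinv_l; lra.
rewrite Rmax_right // Rmin_right //; field; lra.
Qed.

Section Part2.
Variables (N : nat) (adj : rel 'I_N) (eta : R).
Hypothesis Heta : 1 < eta.

Lemma Pop_spin x i : Pop adj eta (fun y => spin (y i)) x = vavg adj x i / eta.
Proof. by rewrite /Pop trans_spin p_plus_lin //; apply: vavg_abs. Qed.

Variable mu0 : state N -> R.
Hypothesis Hmu : is_distribution mu0.

Definition mk k i := Ex adj eta mu0 k (fun y => spin (y i)).

Lemma mk_bound k i : Rabs (mk k i) <= (/ eta) ^ k.
Proof.
elim: k i => [|k IH] i.
  rewrite /mk /Ex /=; case: Hmu => H0 H1.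
  apply: Rle_trans (sum_abs _ _ _) _.
  rewrite -H1 /Rsum; apply: sum_le => x _; rewrite Rabs_mult Rabs_right ?(H0 x); last by apply: Rle_ge.
  have : Rabs (spin (x i)) = 1 by rewrite /spin; case: (x i); [rewrite Rabs_right; lra | rewrite Rabs_left; lra].
  move=> ->; lra.
set n := INR #|nbhd adj i|.
have Hn : 0 < n by apply: nbhd_pos.
pose c := / (n * eta).
have Hc : 0 < c by apply: Rinv_0_lt_compat; nra.
have E : mk k.+1 i = c * \big[Rplus/0]_(j in nbhd adj i) mk k j.
  rewrite /mk Ex_step /Ex.
  rewrite (eq_bigr (fun x => c * \big[Rplus/0]_(j in nbhd adj i) (dist adj eta mu0 k x * spin (x j)))); last first.
    move=> x _; rewrite Pop_spin vavgE -big_distrr /= /ssum -/n /c; move: (dist _ _ _ _ _) (\big[Rplus/0]_(j in _) _) => a b; field; lra.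
  rewrite -big_distrr /=; congr (_ * _); exact: exchange_big.
rewrite E Rabs_mult (Rabs_right c); last lra.
apply: Rle_trans (Rmult_le_compat_l _ _ _ (Rlt_le _ _ Hc) (sum_abs _ _ _)) _.
have H5 : \big[Rplus/0]_(t in nbhd adj i) Rabs (mk k t) <= \big[Rplus/0]_(t in nbhd adj i) (/ eta) ^ k.
  by apply: sum_le => j _; apply: IH.
apply: Rle_trans (Rmult_le_compat_l _ _ _ (Rlt_le _ _ Hc) H5) _.
rewrite sum_const -/n /c /=; right; field; lra.
Qed.

Lemma part2 : Un_cv (expected_sum adj eta mu0) 0.
Proof.
have Hb : forall k, Rabs (expected_sum adj eta mu0 k) <= INR N * (/eta) ^ k.
  move=> k.
  have -> : expected_sum adj eta mu0 k = \big[Rplus/0]_(i : 'I_N) mk k i.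
    rewrite /expected_sum /Rsum /mk /Ex /state_sum /Rsum.
    rewrite (eq_bigr (fun x => \big[Rplus/0]_(i : 'I_N) (dist adj eta mu0 k x * spin (x i)))).
      exact: exchange_big.
    by move=> x _; rewrite big_distrr.
  apply: Rle_trans (sum_abs _ _ _) _.
  have H5 : \big[Rplus/0]_(i : 'I_N) Rabs (mk k i) <= \big[Rplus/0]_(i in 'I_N) (/ eta) ^ k.
    by apply: sum_le => j _; apply: mk_bound.
  apply: Rle_trans H5 _; rewrite sum_const card_ord; lra.
move=> e He.
have Hi : Rabs (/ eta) < 1.
  rewrite Rabs_right; last (apply: Rle_ge; apply: Rlt_le; apply: Rinv_0_lt_compat; lra).
  rewrite -Rinv_1; apply: Rinv_lt_contravar; lra.
have HN : 0 <= INR N by apply: pos_INR.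
have [K HK] := pow_lt_1_zero _ Hi (e / (INR N + 1)) ltac:(apply: Rdiv_lt_0_compat; lra).
exists K => n Hn; rewrite /R_dist Rminus_0_r.
have := HK n Hn; have := Hb n.
rewrite [Rabs ((/ eta) ^ n)]Rabs_right; last (apply: Rle_ge; apply: pow_le; apply: Rlt_le; apply: Rinv_0_lt_compat; lra).
move=> H1 H2.
have H3 : INR N * (/ eta) ^ n <= (INR N + 1) * (/ eta) ^ n.
  apply: Rmult_le_compat_r; last lra.
  apply: pow_le; apply: Rlt_le; apply: Rinv_0_lt_compat; lra.
have H4 : (INR N + 1) * (/ eta) ^ n < e.
  have := Rmult_lt_compat_l (INR N + 1) _ _ ltac:(lra) H2.
  move=> H; apply: Rlt_le_trans H _; right; field; lra.
lra.
Qed.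
End Part2.


Section Part1.
Variables (N : nat) (adj : rel 'I_N) (eta : R).
Hypothesis Heta0 : 0 < eta.
Hypothesis Hhi : eta <= 1.

Lemma p_plus_1 : p_plus eta 1 = 1.
Proof.
rewrite /p_plus /unif_cdf.
have H : (- 1 + eta) / (2 * eta) <= 0.
  rewrite /Rdiv; apply: (Rmult_le_reg_r (2*eta)); first lra.
  rewrite Rmult_assoc Rinv_l; lra.
rewrite Rmax_left // Rmin_right; lra.
Qed.

Lemma p_plus_m1 : p_plus eta (-1) = 0.
Proof.
rewrite /p_plus /unif_cdf.
have H : 1 <= (- -1 + eta) / (2 * eta).
  rewrite /Rdiv; apply: (Rmult_le_reg_r (2*eta)); first lra.
  rewrite Rmult_assoc Rinv_l; lra.
rewrite Rmax_right; last lra. rewrite Rmin_left //; lra.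
Qed.

Lemma ssum_plus (x : state N) i : (forall j, j \in nbhd adj i -> x j) -> ssum adj x i = INR #|nbhd adj i|.
Proof.
move=> H; rewrite /ssum (eq_bigr (fun _ => 1)) ?sum_const; first lra.
by move=> j /H ->.
Qed.

Lemma ssum_minus (x : state N) i : (forall j, j \in nbhd adj i -> ~~ x j) -> ssum adj x i = - INR #|nbhd adj i|.
Proof.
move=> H; rewrite /ssum (eq_bigr (fun _ => -1)) ?sum_const; first lra.
by move=> j /H /negbTE ->.
Qed.

Lemma vavg_plus (x : state N) i : (forall j, j \in nbhd adj i -> x j) -> vavg adj x i = 1.
Proof. move=> H; rewrite vavgE ssum_plus //; have := nbhd_pos adj i; move=> ?; field; lra. Qed.

Lemma vavg_minus (x : state N) i : (forall j, j \in nbhd adj i -> ~~ x j) -> vavg adj x i = -1.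
Proof. move=> H; rewrite vavgE ssum_minus //; have := nbhd_pos adj i; move=> ?; field; lra. Qed.

Lemma fac_agree x i b : agreement x -> fac adj eta x i b = if b == x i then 1 else 0.
Proof.
case/orP=> /forallP H.
- rewrite /fac vavg_plus ?p_plus_1; last by move=> j _; apply: H.
  by rewrite H; case: b => /=; lra.
- rewrite /fac vavg_minus ?p_plus_m1; last by move=> j _; apply: H.
  by rewrite (negbTE (H i)); case: b => /=; lra.
Qed.

Lemma trans_agree x y : agreement x -> trans adj eta x y = if y == x then 1 else 0.
Proof.
move=> Hx; rewrite transE; case: eqP => [->|Hne].
  by rewrite big1 // => i _; rewrite fac_agree // eqxx.
have [i Hi] : exists i, y i != x i.
  apply: Classical_Prop.NNPP => Hn; apply: Hne; apply/ffunP => i.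
  by apply/eqP; apply: Classical_Prop.NNPP => H; apply: Hn; exists i; apply/negP.
by rewrite (bigD1 i) //= fac_agree // (negbTE Hi) Rmult_0_l.
Qed.

Lemma absorb g x : agreement x -> Pop adj eta g x = g x.
Proof.
move=> Hx; rewrite /Pop (bigD1 x) //= trans_agree // eqxx big1; first lra.
by move=> y /negbTE Hy; rewrite trans_agree // Hy Rmult_0_l.
Qed.

Fixpoint Pn (n : nat) (f : state N -> R) : state N -> R :=
  match n with O => f | S n => Pop adj eta (Pn n f) end.

Lemma Pn_comm n f : Pn n (Pop adj eta f) = Pop adj eta (Pn n f).
Proof. by elim: n => [|n IH] //=; rewrite IH. Qed.

Lemma Ex_shift mu0 k n f : Ex adj eta mu0 (k + n) f = Ex adj eta mu0 k (Pn n f).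
Proof.
elim: n f => [|n IH] f; first by rewrite addn0.
by rewrite addnS Ex_step IH Pn_comm.
Qed.

Lemma Pop_ge0 g x : (forall y, 0 <= g y) -> 0 <= Pop adj eta g x.
Proof. move=> H; apply: sum_ge0 => y _; apply: Rmult_le_pos => //; apply: trans_ge0. Qed.

Lemma Pn_ge0 n g x : (forall y, 0 <= g y) -> 0 <= Pn n g x.
Proof. move=> H; elim: n x => [|n IH] x //=; exact: Pop_ge0. Qed.

Definition A1 (x : state N) : R := if agreement x then 1 else 0.

Lemma A1_ge0 x : 0 <= A1 x.
Proof. rewrite /A1; case: ifP => _; lra. Qed.

Lemma Pn_agree n x : agreement x -> Pn n A1 x = 1.
Proof. move=> Hx; elim: n => [|n IH] /=; first by rewrite /A1 Hx. by rewrite absorb. Qed.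

Lemma Pop_ge_term g x y : (forall y, 0 <= g y) -> trans adj eta x y * g y <= Pop adj eta g x.
Proof. move=> H; rewrite /Pop; apply: (@sum_ge_term _ (fun z => trans adj eta x z * g z) y) => z; apply: Rmult_le_pos => //; apply: trans_ge0. Qed.

End Part1.


Section Pos.
Variables (N : nat) (adj : rel 'I_N) (eta : R).
Hypothesis Heta0 : 0 < eta.
Hypothesis Hhi : eta <= 1.
Hypothesis Hlo : 1 - 2 / INR (maxdeg adj) < eta.
Hypothesis Hsym : forall i j, adj i j = adj j i.
Hypothesis Hconn : forall i j, connect adj i j.

Lemma mixed_edge (x : state N) a b : x a -> ~~ x b -> exists u v, [/\ adj u v, x u & ~~ x v].
Proof.
move=> Ha Hb; have /connectP [p Hp Hl] := Hconn a b.
elim: p a Ha Hp Hl => [|c p IH] a Ha /= Hp Hl.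
  by move: Hb; rewrite Hl Ha.
case/andP: Hp => Hac Hp.
case Hc: (x c); first by apply: (IH c).
by exists a, c; rewrite Hac Ha Hc.
Qed.

Definition spread (x : state N) : state N := [ffun i => [exists j in nbhd adj i, x j]].

Lemma spread_ge (x : state N) i : x i -> spread x i.
Proof. move=> H; rewrite ffunE; apply/existsP; exists i; by rewrite nbhd_self. Qed.

Lemma neg_vavg_lt (x : state N) i j : j \in nbhd adj i -> x j -> - vavg adj x i < eta.
Proof.
move=> Hj Hxj.
set n := INR #|nbhd adj i|.
have Hn : 0 < n by apply: nbhd_pos.
have HnD : n <= INR (maxdeg adj).
  apply: le_INR; apply/leP; rewrite /maxdeg.
  exact: (@leq_bigmax _ (fun k => #|nbhd adj k|) i).
have Hs : 2 - n <= ssum adj x i.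
  have E : \big[Rplus/0]_(k in nbhd adj i) (spin (x k) + 1) = ssum adj x i + n.
    rewrite big_split /= sum_const /ssum /n Rmult_1_r; reflexivity.
  have H2 : spin (x j) + 1 <= \big[Rplus/0]_(k in nbhd adj i) (spin (x k) + 1).
    apply: (@sum_ge_term_P _ (fun k => k \in nbhd adj i) (fun k => spin (x k) + 1) j Hj).
    by move=> k _; rewrite /spin; case: (x k); lra.
  move: H2; rewrite E Hxj /spin; lra.
have H1 : - vavg adj x i <= 1 - 2 / n.
  rewrite vavgE -/n /Rdiv.
  have Hw : n * / n = 1 by field; lra.
  have Hw0 : 0 < / n by apply: Rinv_0_lt_compat.
  have := Rmult_le_compat_r (/ n) _ _ (Rlt_le _ _ Hw0) Hs. nra.
have H2 : 2 / INR (maxdeg adj) <= 2 / n.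
  rewrite /Rdiv; apply: Rmult_le_compat_l; first lra.
  by apply: Rinv_le_contravar.
lra.
Qed.

Lemma trans_spread_pos (x : state N) : 0 < trans adj eta x (spread x).
Proof.
rewrite transE; apply: prod_gt0 => i; rewrite /fac.
case Hs: (spread x i).
- move: Hs; rewrite ffunE => /exists_inP [j Hj Hxj].
  have := neg_vavg_lt Hj Hxj; set v := vavg adj x i => Hv.
  rewrite /p_plus /unif_cdf.
  have Ha : (- v + eta) / (2 * eta) < 1.
    rewrite /Rdiv; apply: (Rmult_lt_reg_r (2*eta)); first lra.
    rewrite Rmult_assoc Rinv_l; lra.
  have : Rmax 0 ((- v + eta) / (2 * eta)) < 1 by apply: Rmax_lub_lt; lra.
  have := Rmin_r 1 (Rmax 0 ((- v + eta) / (2 * eta))); lra.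
- move: Hs; rewrite ffunE => /exists_inPn H.
  rewrite vavg_minus ?p_plus_m1 //; lra.
Qed.

Definition nplus (x : state N) := #|[set i | x i]|.

Lemma nplus_spread (x : state N) : ~~ agreement x -> (nplus x < nplus (spread x))%N.
Proof.
rewrite /agreement negb_or => /andP [/forallPn [b Hb] /forallPn [a Ha]].
rewrite negbK in Ha.
have [u [v [Huv Hu Hv]]] := mixed_edge Ha Hb.
apply: proper_card; apply/properP; split.
  by apply/subsetP => i; rewrite !inE; apply: spread_ge.
exists v; rewrite !inE ?(negbTE Hv) //.
rewrite ffunE; apply/exists_inP; exists u => //; by rewrite inE Hsym Huv orbT.
Qed.

Lemma pos m (x : state N) : (N <= nplus x + m)%N -> [exists i, x i] -> 0 < Pn adj eta m (A1 (N:=N)) x.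
Proof.
elim: m x => [|m IH] x Hm Hex.
  rewrite addn0 in Hm.
  have Hall : [forall i, x i].
    apply: Classical_Prop.NNPP => /negP /forallPn [b Hb].
    have : (nplus x < #|[set: 'I_N]|)%N.
      apply: proper_card; apply/properP; split; first exact: subsetT.
      by exists b; rewrite !inE ?(negbTE Hb).
    by rewrite cardsT card_ord ltnNge Hm.
  by rewrite /= /A1 /agreement Hall /=; lra.
case Ha: (agreement x); first by rewrite Pn_agree //; lra.
have Hy := nplus_spread (negbT Ha).
have Hpos := IH (spread x) ltac:(move: Hm Hy; lia)
  ltac:(case/existsP: Hex => i Hi; apply/existsP; exists i; exact: spread_ge).
have := @Pop_ge_term _ adj eta (Pn adj eta m (A1 (N:=N))) x (spread x) (fun y => Pn_ge0 _ _ _ _ (@A1_ge0 N)).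
have := trans_spread_pos x.
simpl; nra.
Qed.

Lemma pos_all (x : state N) : 0 < Pn adj eta N (A1 (N:=N)) x.
Proof.
case Hex: [exists i, x i]; first by apply: pos => //; exact: leq_addl.
have Ha : agreement x.
  by move/negbT/existsPn: Hex => Hex; rewrite /agreement; apply/orP; right; apply/forallP.
have := @Pn_agree N adj eta Heta0 Hhi N x Ha; lra.
Qed.

End Pos.


Lemma fin_min (T : finType) (g : T -> R) : (forall x, 0 < g x) ->
  exists d, 0 < d <= 1 /\ forall x, d <= g x.
Proof.
move=> H.
suff [d [Hd Hs]] : exists d, 0 < d <= 1 /\ forall x, x \in enum T -> d <= g x.
  by exists d; split => // x; apply: Hs; rewrite mem_enum.
elim: (enum T) => [|a s [d [Hd Hs]]]; first by exists 1; split => //; lra.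
exists (Rmin d (g a)); split.
  split; [apply: Rmin_glb_lt; [lra| exact: H] | have := Rmin_l d (g a); lra].
move=> x; rewrite inE => /orP [/eqP ->|Hx]; first exact: Rmin_r.
have := Rmin_l d (g a); have := Hs x Hx; lra.
Qed.

Section Final.
Variables (N : nat) (adj : rel 'I_N) (eta : R).
Hypothesis Heta0 : 0 < eta.
Hypothesis Hhi : eta <= 1.
Hypothesis Hlo : 1 - 2 / INR (maxdeg adj) < eta.
Hypothesis Hsym : forall i j, adj i j = adj j i.
Hypothesis Hconn : forall i j, connect adj i j.

Lemma stay_ge0 M s : 0 <= stay_prob adj eta M s.
Proof.
elim: M s => [|M IH] s /=; first by case: ifP => _; lra.
case: ifP => _; last lra.
rewrite /Rsum; apply: sum_ge0 => y _; apply: Rmult_le_pos => //; apply: trans_ge0.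
Qed.

Lemma stay_agree M s : agreement s -> stay_prob adj eta M s = 1.
Proof.
elim: M s => [|M IH] s Hs /=; first by rewrite Hs.
rewrite Hs; change (Pop adj eta (stay_prob adj eta M) s = 1).
by rewrite absorb // IH.
Qed.

Lemma A1_le_stay M s : A1 s <= stay_prob adj eta M s.
Proof. rewrite /A1; case: ifP => H; [rewrite stay_agree //; lra | exact: stay_ge0]. Qed.

Variable mu0 : state N -> R.
Hypothesis Hmu : is_distribution mu0.

Lemma Ex_mono k f g : (forall x, f x <= g x) -> Ex adj eta mu0 k f <= Ex adj eta mu0 k g.
Proof.
move=> H; apply: sum_le => x _; apply: Rmult_le_compat_l; last exact: H.
by apply: dist_ge0; case: Hmu.
Qed.

Lemma part1 eps : 0 < eps -> exists K, forall M, 1 - eps <= agree_window_prob adj eta mu0 K M.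
Proof.
move=> He.
have [d [[Hd0 Hd1] Hd]] := fin_min (pos_all Heta0 Hhi Hlo Hsym Hconn).
pose a j := Ex adj eta mu0 (j * N) (@A1 N).
have Hrec : forall j, 1 - a j <= (1 - d) ^ j.
  elim=> [|j IH].
    rewrite /= /a; have : 0 <= Ex adj eta mu0 (0 * N) (@A1 N).
      apply: sum_ge0 => x _; apply: Rmult_le_pos; [by apply: dist_ge0; case: Hmu | exact: A1_ge0].
    lra.
  have Hs : a j.+1 = Ex adj eta mu0 (j * N) (Pn adj eta N (@A1 N)).
    by rewrite /a mulSn addnC Ex_shift.
  have Hlb : Ex adj eta mu0 (j * N) (fun x => (1 - d) * A1 x + d * 1) <= a j.+1.
    rewrite Hs; apply: Ex_mono => x; have -> : A1 x = if agreement x then 1 else 0 by []; case Hx: (agreement x).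
      have := @Pn_agree N adj eta Heta0 Hhi N x Hx; lra.
    have := Hd x; lra.
  have Hlin : Ex adj eta mu0 (j * N) (fun x => (1 - d) * A1 x + d * 1)
            = (1 - d) * a j + d * Ex adj eta mu0 (j * N) (fun _ => 1).
    rewrite /a /Ex.
    rewrite (eq_bigr (fun x => (1 - d) * (dist adj eta mu0 (j * N) x * A1 x) + d * (dist adj eta mu0 (j * N) x * 1))).
      by rewrite big_split /= -!big_distrr.
    by move=> x _; ring.
  rewrite Ex_one // in Hlin.
  have : (1 - d) * (1 - a j) <= (1 - d) * (1 - d) ^ j by apply: Rmult_le_compat_l; lra.
  simpl; lra.
have Hi : Rabs (1 - d) < 1 by rewrite Rabs_right; lra.
have [J HJ] := pow_lt_1_zero _ Hi eps He.
exists (J * N)%nat => M.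
have := HJ J (le_n J); rewrite Rabs_right; last (apply: Rle_ge; apply: pow_le; lra).
have := Hrec J => H1 H2.
have : a J <= agree_window_prob adj eta mu0 (J * N) M.
  rewrite /a /agree_window_prob /Ex /Rsum; apply: sum_le => s _.
  apply: Rmult_le_compat_l; [by apply: dist_ge0; case: Hmu | exact: A1_le_stay].
lra.
Qed.
End Final.

Theorem proposition1 (N : nat) (adj : rel 'I_N) (eta : R)
  (HN : (2 <= N)%N) (Hsimple : simple_graph adj) (Hconn : connected_graph adj)
  (Heta : (0 < eta)) :
  ((1 - 2 / INR (maxdeg adj) < eta <= 1) ->
   forall mu0 : state N -> R, is_distribution mu0 ->
   forall eps : R, (0 < eps) ->
   exists K : nat, forall M : nat, (1 - eps <= agree_window_prob adj eta mu0 K M))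
  /\
  ((1 < eta) ->
   forall mu0 : state N -> R, is_distribution mu0 ->
   Un_cv (expected_sum adj eta mu0) 0).
Proof.
split.
- move=> [Hlo Hhi] mu0 Hmu eps He.
  exact: (part1 Heta Hhi Hlo (proj1 Hsimple) Hconn Hmu He).
- move=> H1 mu0 Hmu; exact: part2.
Qed.
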